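(* Let $\Sigma$ be an alphabet with $|\Sigma|\ge 3$ and $f\colon\Sigma^*\to\Sigma^*$ RCP. If $f(a)\in a\Sigma^*$ for every letter $a\in\Sigma$, then $f(x)\in x\Sigma^*$ for every word $x\in\Sigma^*$.
   Context: $\Sigma^*$ is the free monoid over $\Sigma$ (finite words, concatenation, empty word $\varepsilon$). For a word $w$, $w\Sigma^*$ denotes the set of words having $w$ as a prefix. A function $f\colon(\Sigma^* )^k\to\Sigma^*$ is RCP if for every monoid morphism $\varphi\colon\Sigma^*\to\Sigma^*$ and all $u_1,\ldots,u_k,v_1,\ldots,v_k$ with $\varphi(u_i)=\varphi(v_i)$ for all $i$, we have $\varphi(f(u_1,\ldots,u_k))=\varphi(f(v_1,\ldots,v_k))$. *)

(* Defs.v *)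
From mathcomp Require Import all_boot.
Set Implicit Arguments. Unset Strict Implicit. Unset Printing Implicit Defensive.

(* Words over an alphabet Sigma (a finite type) are seq Sigma; concatenation is ++,
   the empty word is [::]. *)

Definition monoid_morphism (Sigma : Type) (phi : seq Sigma -> seq Sigma) : Prop :=
  phi [::] = [::] /\ forall u v, phi (u ++ v) = phi u ++ phi v.

(* RCP for a unary function f : Sigma^* -> Sigma^* (k = 1). *)
Definition RCP1 (Sigma : Type) (f : seq Sigma -> seq Sigma) : Prop :=
  forall phi : seq Sigma -> seq Sigma, monoid_morphism phi ->
    forall u v, phi u = phi v -> phi (f u) = phi (f v).

Definition has_prefix (Sigma : Type) (x w : seq Sigma) : Prop :=
  exists z, w = x ++ z.

(* Main.v *)
Require Import Defs.
From mathcomp Require Import all_boot.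
Set Implicit Arguments. Unset Strict Implicit. Unset Printing Implicit Defensive.

Definition hom {S : Type} (g : S -> seq S) (s : seq S) : seq S := flatten (map g s).

Lemma hom_nil {S : Type} (g : S -> seq S) : hom g [::] = [::].
Proof. by []. Qed.

Lemma hom_cons {S : Type} (g : S -> seq S) c s : hom g (c :: s) = g c ++ hom g s.
Proof. by []. Qed.

Lemma hom_mm {S : Type} (g : S -> seq S) : Defs.monoid_morphism (hom g).
Proof. split=> // u v; by rewrite /hom map_cat flatten_cat. Qed.

Lemma key {S : Type} (f : seq S -> seq S) g u v : RCP1 f -> hom g u = hom g v ->
  has_prefix v (f v) -> has_prefix (hom g v) (hom g (f u)).
Proof.
move=> Hf Huv [z Hz]. rewrite (Hf _ (hom_mm g) u v Huv) Hz /hom map_cat flatten_cat.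
by exists (hom g z).
Qed.

Lemma hp_nil {S : Type} (w : seq S) : has_prefix [::] w.
Proof. by exists w. Qed.

Lemma hp_cons {S : Type} (c : S) x c' w : has_prefix (c::x) (c'::w) <-> c = c' /\ has_prefix x w.
Proof.
split.
- case=> z /= [-> ->]; split=> //; by exists z.
- case=> -> [z ->]; by exists z.
Qed.

Lemma hp_nilw {S : Type} (c : S) x : ~ has_prefix (c::x) [::].
Proof. by case. Qed.

Lemma hp_cat {S : Type} (p x w : seq S) : has_prefix (p++x) (p++w) <-> has_prefix x w.
Proof.
elim: p => [|c p IH] //=. split.
- by case/hp_cons=> _ /IH.
- by move/IH => H; apply/hp_cons.
Qed.

Lemma hp_size {S : Type} (x w : seq S) : has_prefix x w -> size x <= size w.
Proof. by case=> z ->; rewrite size_cat leq_addr. Qed.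

Lemma hom_fix {S : eqType} (g : S -> seq S) s :
  (forall c, c \in s -> g c = [::c]) -> hom g s = s.
Proof.
elim: s => //= c s IH H. rewrite hom_cons H ?mem_head // IH // => c' Hc'.
apply: H; by rewrite in_cons Hc' orbT.
Qed.

Lemma L1 {S : eqType} (d : S) g1 g2 : g1 d = [::d] -> g2 d = [::d] ->
  (forall c, c != d -> (g1 c = [::c]) \/ (g2 c = [::c])) ->
  forall n w, has_prefix (nseq n d) (hom g1 w) -> has_prefix (nseq n d) (hom g2 w) ->
  has_prefix (nseq n d) w.
Proof.
move=> h1 h2 hc. elim=> [|n IH] w H1 H2; first exact: hp_nil.
case: w H1 H2 => [|c w] H1 H2; first by case: (hp_nilw H1).
case: (eqVneq c d) => [E|ne].
- rewrite E !hom_cons h1 h2 /= in H1 H2 *. apply/hp_cons; split=> //. apply: IH.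
  + by case/hp_cons: H1.
  + by case/hp_cons: H2.
- case: (hc c ne) => E; [move: H1 | move: H2]; rewrite hom_cons E /= => /hp_cons [E2 _];
  by move: ne; rewrite E2 eqxx.
Qed.

Lemma fresh (Sigma : finType) (d e : Sigma) : 3 <= #|Sigma| -> exists a : Sigma, a != d /\ a != e.
Proof.
move=> H3.
have : ~~ ([set: Sigma] \subset [set d; e]).
  apply/negP => /subset_leq_card. rewrite cardsT cards2.
  by case: (d != e) H3 => /= H3 H; move: (leq_trans H3 H).
case/subsetPn => a _. rewrite !inE negb_or => /andP [? ?]. by exists a.
Qed.

Lemma Ulem (Sigma : finType) (f : seq Sigma -> seq Sigma) : 3 <= #|Sigma| -> RCP1 f ->
  (forall a : Sigma, has_prefix [:: a] (f [:: a])) ->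
  forall d n, has_prefix (nseq n d) (f (nseq n d)).
Proof.
move=> H3 Hf Ha d n.
have [a [ad _]] := fresh d d H3.
have [e [ed ea]] := fresh d a H3.
pose g1 := fun c => if c == a then nseq n d else [::c].
pose g2 := fun c => if c == e then nseq n d else [::c].
have fixn : forall g : Sigma -> seq Sigma, g d = [::d] -> hom g (nseq n d) = nseq n d.
  move=> g gd; apply: hom_fix => c; rewrite mem_nseq => /andP [_ /eqP ->] //.
have g1d : g1 d = [::d] by rewrite /g1 eq_sym (negbTE ad).
have g2d : g2 d = [::d] by rewrite /g2 eq_sym (negbTE ed).
apply: (L1 g1d g2d).
- move=> c cd. rewrite /g1 /g2. case: (eqVneq c a) => [->|_]; last by left.
  by right; rewrite eq_sym (negbTE ea).
- have E : hom g1 (nseq n d) = hom g1 [::a].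
    by rewrite fixn // /hom /= /g1 eqxx cats0.
  have := key Hf E (Ha a).
  by rewrite /hom /= /g1 eqxx cats0 -/(hom g1 _).
- have E : hom g2 (nseq n d) = hom g2 [::e].
    by rewrite fixn // /hom /= /g2 eqxx cats0.
  have := key Hf E (Ha e).
  by rewrite /hom /= /g2 eqxx cats0 -/(hom g2 _).
Qed.

Lemma L2 {S : eqType} (d e : S) g k : g d = [::d] -> g e = [::e] -> k d = [::d] -> k e = [::d] ->
  (forall c, c != d -> c != e -> k c = [::c]) ->
  forall y w, all (fun c => (c == d) || (c == e)) y -> has_prefix y (hom g w) ->
  has_prefix (nseq (size y) d) (hom k w) -> has_prefix y w.
Proof.
move=> gd ge kd ke hk. elim=> [|c y IH] w Hy H1 H2; first exact: hp_nil.
case: w H1 H2 => [|c' w] H1 H2; first by case: (hp_nilw H2).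
case/andP: Hy => Hc Hy.
have Hc' : (c' == d) || (c' == e).
  case: (eqVneq c' d) => //= ne1; case: (eqVneq c' e) => //= ne2.
  move: H2; rewrite hom_cons (hk c' ne1 ne2) /= => /hp_cons [E _].
  by move: ne1; rewrite E eqxx.
have gc' : g c' = [::c'] by case/orP: Hc' => /eqP ->.
have kc' : k c' = [::d] by case/orP: Hc' => /eqP ->.
rewrite hom_cons gc' /= in H1. rewrite hom_cons kc' /= in H2.
case/hp_cons: H1 => E H1. case/hp_cons: H2 => _ H2.
apply/hp_cons; split=> //. exact: IH.
Qed.

Lemma Blem (Sigma : finType) (f : seq Sigma -> seq Sigma) : 3 <= #|Sigma| -> RCP1 f ->
  (forall a : Sigma, has_prefix [:: a] (f [:: a])) ->
  forall d e a : Sigma, a != d -> a != e -> forall y, all (fun c => (c == d) || (c == e)) y ->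
  has_prefix y (f y).
Proof.
move=> H3 Hf Ha d e a ad ae y Hy.
pose g := fun c => if c == a then y else [::c].
pose k := fun c => if c == e then [::d] else [::c].
have gd : g d = [::d] by rewrite /g eq_sym (negbTE ad).
have ge : g e = [::e] by rewrite /g eq_sym (negbTE ae).
have kd : k d = [::d] by rewrite /k; case: ifP.
have ke : k e = [::d] by rewrite /k eqxx.
have hk : forall c, c != d -> c != e -> k c = [::c] by move=> c _ ce; rewrite /k (negbTE ce).
apply: (L2 gd ge kd ke hk) => //.
- have gy : hom g y = y.
    apply: hom_fix => c /(allP Hy) /orP [] /eqP -> //.
  have E : hom g y = hom g [::a] by rewrite gy /hom /= /g eqxx cats0.
  have := key Hf E (Ha a).
  by rewrite /hom /= /g eqxx cats0 -/(hom g _).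
- have ky : forall s, all (fun c => (c == d) || (c == e)) s -> hom k s = nseq (size s) d.
    elim=> //= c s IH /andP [Hc Hs]. rewrite hom_cons IH //.
    by case/orP: Hc => /eqP ->; rewrite ?kd ?ke.
  have kn : hom k (nseq (size y) d) = nseq (size y) d.
    by rewrite ky ?size_nseq // all_nseq eqxx orbT.
  have E : hom k y = hom k (nseq (size y) d) by rewrite kn ky.
  have := key Hf E (Ulem H3 Hf Ha d (size y)).
  by rewrite kn.
Qed.

Definition pr {S : eqType} (d e : S) (c : S) : seq S := if (c == d) || (c == e) then [::c] else [::].

Lemma L3 {S : eqType} (x w : seq S) : size x <= size w ->
  (forall d e, has_prefix (hom (pr d e) x) (hom (pr d e) w)) -> has_prefix x w.
Proof.
elim: x w => [|c x IH] w Hs H; first exact: hp_nil.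
case: w Hs H => [|c' w] Hs H; first by [].
have := H c c'. rewrite !hom_cons /pr eqxx eqxx orbT /= => /hp_cons [E _].
subst c'. apply/hp_cons; split=> //. apply: IH => // d e.
have := H d e. rewrite !hom_cons. by move/hp_cat.
Qed.

Lemma all_pr {S : eqType} (d e : S) x : all (fun c => (c == d) || (c == e)) (hom (pr d e) x).
Proof.
elim: x => //= c x IH. rewrite hom_cons all_cat IH andbT /pr.
by case: ifP => //= ->.
Qed.

Theorem mainTheorem9 (Sigma : finType) (f : seq Sigma -> seq Sigma) :
  3 <= #|Sigma| ->
  RCP1 f ->
  (forall a : Sigma, has_prefix [:: a] (f [:: a])) ->
  forall x : seq Sigma, has_prefix x (f x).
Proof.
move=> H3 Hf Ha x.
case: x => [|c0 x']; first exact: hp_nil.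
set x := c0 :: x'.
apply: L3.
- pose g := fun _ : Sigma => [::c0].
  have gs : forall s, hom g s = nseq (size s) c0.
    by elim=> //= c s IH; rewrite hom_cons IH.
  have E : hom g x = hom g (nseq (size x) c0) by rewrite !gs size_nseq.
  have := hp_size (key Hf E (Ulem H3 Hf Ha c0 (size x))).
  by rewrite !gs !size_nseq.
- move=> d e.
  have [a [ad ae]] := fresh d e H3.
  set y := hom (pr d e) x.
  have Hy := all_pr d e x.
  have py : hom (pr d e) y = y.
    apply: hom_fix => c /(allP Hy) Hc. by rewrite /pr Hc.
  have E : hom (pr d e) x = hom (pr d e) y by rewrite py.
  have := key Hf E (Blem H3 Hf Ha ad ae Hy).
  by rewrite py.
Qed.
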